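(* Let $a,b,c\in\mathbb R$. The sine polynomial $a\sin(x)+b\sin(2x)+c\sin(3x)$ is nonnegative for all $x\in[0,\pi]$ if and only if either (i) $|b|\geq 4c$ and $a-2|b|+3c\geq 0$, or (ii) $|b|<4c$ and $a\geq c+\frac{b^2}{4c}$. In all cases, a necessary condition for this nonnegativity is $a\geq |b|$. *)

(* Defs.v *)
From Stdlib Require Import Reals.
Open Scope R_scope.

Definition sinpoly (a b c x : R) : R :=
  a * sin x + b * sin (2 * x) + c * sin (3 * x).

(* Main.v *)
Require Import Defs.
From Stdlib Require Import Reals Lra Psatz.
Open Scope R_scope.

Definition fq (a b c t : R) := a - c + 2 * b * t + 4 * c * t ^ 2.

Lemma sinpoly_eq a b c x : sinpoly a b c x = sin x * fq a b c (cos x).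
Proof.
  unfold sinpoly, fq.
  replace (3 * x) with (2 * x + x) by ring.
  rewrite sin_plus, !sin_2a, cos_2a.
  pose proof (sin2_cos2 x). unfold Rsqr in H.
  replace (sin x * sin x) with (1 - cos x * cos x) in * by lra.
  ring_simplify. nra.
Qed.

Lemma inner a b c t : (forall x, 0 <= x <= PI -> 0 <= sinpoly a b c x) ->
  -1 < t < 1 -> 0 <= fq a b c t.
Proof.
  intros H Ht.
  pose proof (acos_bound_lt t Ht).
  pose proof (H (acos t) ltac:(lra)).
  rewrite sinpoly_eq, cos_acos in H1 by lra.
  assert (0 < sin (acos t)) by (apply sin_gt_0; lra).
  nra.
Qed.

Lemma endpoint a b c : (forall t, -1 < t < 1 -> 0 <= fq a b c t) -> 0 <= fq a b c 1.
Proof.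
  intros H.
  destruct (Rle_or_lt 0 (fq a b c 1)) as [|Hn]; auto.
  set (e := - fq a b c 1).
  set (M := 2 * Rabs b + 8 * Rabs c + 1).
  assert (HM : 1 <= M) by (unfold M; pose proof (Rabs_pos b); pose proof (Rabs_pos c); lra).
  assert (He : 0 < e) by (unfold e; lra).
  set (d := e / (e + 2 * M)).
  assert (Hd0 : 0 < d) by (unfold d; apply Rdiv_lt_0_compat; lra).
  assert (Hd1 : d * (e + 2*M) = e) by (unfold d; field; lra).
  assert (Hd2 : d < 1) by nra.
  assert (HdM : d * M < e) by nra.
  pose proof (H (1 - d) ltac:(lra)).
  assert (Hk : Rabs (2 * b + 4 * c * (2 - d)) <= M).
  { unfold M. eapply Rle_trans. apply Rabs_triang.
    rewrite !Rabs_mult, (Rabs_right 2) by lra. rewrite (Rabs_right 4) by lra.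
    rewrite (Rabs_right (2 - d)) by lra.
    pose proof (Rabs_pos c). nra. }
  assert (fq a b c (1 - d) = fq a b c 1 - d * (2 * b + 4 * c * (2 - d))) by (unfold fq; ring).
  pose proof (Rle_abs (- (2 * b + 4 * c * (2 - d)))) as H2; rewrite Rabs_Ropp in H2.
  assert (fq a b c 1 = -e) by (unfold e; ring).
  assert (d * (-(2 * b + 4 * c * (2 - d))) <= d * M) by (apply Rmult_le_compat_l; lra). lra.
Qed.

Lemma fq_neg a b c t : fq a b c (- t) = fq a (-b) c t.
Proof. unfold fq; ring. Qed.

Lemma iff_part a b c :
  (forall x : R, 0 <= x <= PI -> 0 <= sinpoly a b c x) <->
     ((Rabs b >= 4 * c /\ a - 2 * Rabs b + 3 * c >= 0) \/
      (Rabs b < 4 * c /\ a >= c + b ^ 2 / (4 * c))).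
Proof.
  split.
  - intros H.
    assert (Hin : forall t, -1 < t < 1 -> 0 <= fq a b c t) by (intros; apply inner; auto).
    assert (H1 := endpoint a b c Hin).
    assert (Hin' : forall t, -1 < t < 1 -> 0 <= fq a (-b) c t).
    { intros t Ht. rewrite <- fq_neg. apply Hin. lra. }
    assert (H2 := endpoint a (-b) c Hin').
    unfold fq in H1, H2.
    destruct (Rle_or_lt (4 * c) (Rabs b)) as [Hb|Hb].
    + left. split; [lra|].
      destruct (Rabs_pos b). unfold Rabs in *; destruct (Rcase_abs b); lra.
      unfold Rabs in *; destruct (Rcase_abs b); lra.
    + right. split; [lra|].
      assert (Hc : 0 < c) by (pose proof (Rabs_pos b); lra).
      assert (Ht : -1 < - b / (4 * c) < 1).
      { assert (Rabs (b / (4*c)) < 1).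
        { unfold Rdiv. rewrite Rabs_mult, Rabs_inv, (Rabs_right (4*c)) by lra.
          apply (Rmult_lt_reg_r (4*c)); [lra|]. field_simplify; lra. }
        unfold Rdiv in *. revert H0. unfold Rabs; destruct (Rcase_abs _); intros; lra. }
      pose proof (Hin _ Ht). unfold fq in H0.
      assert (a - c - b^2/(4*c) = a - c + 2 * b * (- b / (4 * c)) + 4 * c * (- b / (4 * c)) ^ 2)
        by (field; lra).
      lra.
  - intros Hc x Hx.
    rewrite sinpoly_eq.
    assert (0 <= sin x) by (apply sin_ge_0; lra).
    pose proof (COS_bound x) as [Hl Hu].
    apply Rmult_le_pos; auto.
    set (t := cos x) in *. unfold fq.
    destruct Hc as [[Hb Ha]|[Hb Ha]].
    + destruct (Rle_or_lt c 0).
      * assert (0 <= -c * ((1-t)*(1+t))) by (apply Rmult_le_pos; nra).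
        unfold Rabs in *; destruct (Rcase_abs b).
        -- assert (0 <= -b * (1 - t)) by (apply Rmult_le_pos; nra). nra.
        -- assert (0 <= b * (1 + t)) by (apply Rmult_le_pos; nra). nra.
      * unfold Rabs in *; destruct (Rcase_abs b).
        -- assert (0 <= (1-t) * (-2*b - 4*c*(1+t))) by (apply Rmult_le_pos; nra). nra.
        -- assert (0 <= (1+t) * (2*b - 4*c*(1-t))) by (apply Rmult_le_pos; nra). nra.
    + assert (Hc : 0 < c) by (pose proof (Rabs_pos b); lra).
      assert (a - c + 2 * b * t + 4 * c * t ^ 2 =
              (a - c - b^2/(4*c)) + 4 * c * (t + b/(4*c))^2) by (field; lra).
      assert (0 <= 4 * c * (t + b/(4*c))^2) by (apply Rmult_le_pos; [lra| apply pow2_ge_0]). lra.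
Qed.

Theorem corollary1 (a b c : R) :
  ((forall x : R, 0 <= x <= PI -> 0 <= sinpoly a b c x) <->
     ((Rabs b >= 4 * c /\ a - 2 * Rabs b + 3 * c >= 0) \/
      (Rabs b < 4 * c /\ a >= c + b ^ 2 / (4 * c))))
  /\ ((forall x : R, 0 <= x <= PI -> 0 <= sinpoly a b c x) -> a >= Rabs b).
Proof.
  split; [apply iff_part|].
  intros H. apply iff_part in H.
  pose proof (Rabs_pos b).
  destruct H as [[Hb Ha]|[Hb Ha]].
  - lra.
  - assert (Hc : 0 < c) by lra.
    assert (c + b^2/(4*c) - Rabs b = (2*c - Rabs b)^2 / (4*c)).
    { rewrite <- (pow2_abs b). field. lra. }
    assert (0 <= (2*c - Rabs b)^2 / (4*c)).
    { unfold Rdiv. apply Rmult_le_pos; [apply pow2_ge_0| left; apply Rinv_0_lt_compat; lra]. }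
    lra.
Qed.
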